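(* Let $\gamma>0$, $t>0$, let $M$ be a positive integer, and set $\alpha = 1+1/\gamma$. Let $X$ be a random variable with the bounded continuous power-law distribution with exponent $-\alpha$ on the domain $\bigl(1, (\tfrac{t}{t+M+1})^{-\gamma}\bigr)$, i.e. with density proportional to $x^{-\alpha}$ on that interval and $0$ elsewhere. Then: (1) The $(M+1)$-quantiles of $X$ (the $M$ points dividing its distribution into $M+1$ parts of equal probability) are, up to a common positive constant factor (independent of $k$), the numbers $(t+1)^{-\gamma}, (t+2)^{-\gamma}, \dots, (t+M)^{-\gamma}$. (2) Let $\mathbf{F}=(F_1,\dots,F_M)$ be observed frequencies (positive integers) with maximum $F_{\max}=F_1>1$, modeled as $M$ independent draws from the distribution of $X$. With $\gamma$ (hence $\alpha$) and $M$ fixed, the value of $t>0$ that maximizes the likelihood of observing $\mathbf{F}$ is $$t = \frac{M+1}{F_{\max}^{1/\gamma}-1}.$$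
   Context: Setting: one has a data set of $M$ distinct items (error message types) with observed occurrence counts $F_1\ge F_2\ge\dots\ge F_M\ge 1$, where $F_{\max}:=F_1$ is the largest count. A Zipf–Mandelbrot distribution with parameters $\gamma$ and $t$ assigns to the $k$-th most common item a frequency proportional to $(k+t)^{-\gamma}$. In part (2), the observed frequency vector $\mathbf{F}$ is treated as an unordered sample of $M$ values from the continuous distribution of $X$, and the likelihood is the product of the densities of $X$ at $F_1,\dots,F_M$ (which is zero if some $F_k$ lies outside the domain of $X$). *)

(* Defs.v *)
From HB Require Import structures.
From mathcomp Require Import all_boot all_order all_algebra.
From mathcomp Require Import all_classical all_reals all_analysis.
Unset Printing Implicit Defensive.
Import Order.TTheory GRing.Theory Num.Theory.
Import numFieldNormedType.Exports.
Local Open Scope classical_set_scope.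
Local Open Scope ring_scope.

Section ZM.
Context {R : realType}.

Definition zm_alpha (gamma : R) : R := 1 + gamma^-1.

Definition zm_upper (gamma t : R) (M : nat) : R :=
  (t / (t + M%:R + 1)) `^ (- gamma).

Definition zm_support (gamma t : R) (M : nat) : set R :=
  `[1, zm_upper gamma t M]%classic.

Definition zm_norm (gamma t : R) (M : nat) : R :=
  fine (\int[lebesgue_measure]_(x in zm_support gamma t M)
          ((x `^ (- zm_alpha gamma))%:E))%E.

Definition zm_density (gamma t : R) (M : nat) (x : R) : R :=
  if (1 <= x) && (x <= zm_upper gamma t M)
  then x `^ (- zm_alpha gamma) / zm_norm gamma t M
  else 0.

Definition zm_prob (gamma t : R) (M : nat) (A : set R) : R :=
  fine (\int[lebesgue_measure]_(x in A) (zm_density gamma t M x)%:E)%E.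

Definition zm_is_quantile (gamma t : R) (M : nat) (p q : R) : Prop :=
  p <= zm_prob gamma t M `]-oo, q]%classic /\
  1 - p <= zm_prob gamma t M `[q, +oo[%classic.

Definition zm_likelihood (gamma t : R) (M : nat) (F : 'I_M -> nat) : R :=
  \prod_(i < M) zm_density gamma t M (F i)%:R.

End ZM.

(* Main.v *)
Require Import Defs.
From HB Require Import structures.
From mathcomp Require Import all_boot all_order all_algebra.
From mathcomp Require Import all_classical all_reals all_analysis.
From mathcomp Require Import ring lra.
Import Order.TTheory GRing.Theory Num.Theory.
Import numFieldNormedType.Exports.
Local Open Scope classical_set_scope.
Local Open Scope ring_scope.

Section S.
Context {R : realType}.

Lemma derF (K p x : R) : 0 < x ->
  is_derive x 1 (fun y => K * y `^ p) (K * (p * x `^ (p - 1))).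
Proof.
move=> x0.
have h := is_derive1_powR p x0.
apply: is_deriveZ.
Qed.

Lemma int_pow (g c a b : R) : 0 < g -> 0 < a -> a <= b ->
  (\int[lebesgue_measure]_(x in `[a, b]) (c * x `^ (- zm_alpha g))%:E =
   (c * g * (a `^ (- g^-1) - b `^ (- g^-1)))%:E)%E.
Proof.
move=> g0 a0; rewrite le_eqVlt => /predU1P[<-|ab].
  by rewrite set_itv1 integral_set1 subrr mulr0.
pose F := fun y : R => (- (c * g)) * y `^ (- g^-1).
have dF : forall x : R, 0 < x -> is_derive x 1 F ((- (c*g)) * ((- g^-1) * x `^ (- g^-1 - 1))).
  by move=> x x0; apply: derF.
have cF : forall x : R, 0 < x -> {for x, continuous F}.
  move=> x x0; apply: differentiable_continuous; apply/derivable1_diffP.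
  by have [] := dF x x0.
have dG : forall x : R, 0 < x -> derivable (fun y : R => c * y `^ (- zm_alpha g)) x 1.
  by move=> x x0; have [] := derF c (- zm_alpha g) _ x0.
rewrite (@continuous_FTC2 _ _ F).
- by rewrite /F -EFinB; congr EFin; ring.
- done.
- apply: derivable_within_continuous => x; rewrite in_itv /= => /andP[ax _].
  exact: dG (lt_le_trans a0 ax).
- split.
  + move=> x; rewrite in_itv/= => /andP[ax _]; have := dF x (lt_trans a0 ax).
    by case.
  + exact: cvg_at_right_filter (cF a a0).
  + exact: cvg_at_left_filter (cF b (lt_trans a0 ab)).
- move=> x; rewrite in_itv/= => /andP[ax _]; have x0 := lt_trans a0 ax.
  have dFx := dF x x0; rewrite derive1E derive_val /zm_alpha.
  have -> : - g^-1 - 1 = - (1 + g^-1) by ring.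
  field; exact: lt0r_neq0.
Qed.

Lemma prob_restr (g t : R) (M : nat) (A : set R) :
  zm_prob g t M A = fine (\int[lebesgue_measure]_(x in A `&` zm_support g t M)
     ((zm_norm g t M)^-1 * x `^ (- zm_alpha g))%:E)%E.
Proof.
rewrite /zm_prob integral_mkcond [in RHS]integral_mkcond; congr fine.
apply: eq_integral => x _; rewrite !patchE in_setI.
case: (x \in A) => //=.
rewrite /zm_density /zm_support.
have -> : (x \in `[1, zm_upper g t M]%classic) = (1 <= x <= zm_upper g t M).
  by apply/idP/idP; rewrite inE /= in_itv.

by case: ifPn => _ //; rewrite mulrC.
Qed.

Lemma powR_inv_decr {g x y : R} : 0 < g -> 0 < x -> x <= y -> y `^ (- g) <= x `^ (- g).
Proof.
move=> g0 x0 xy; have y0 := lt_le_trans x0 xy.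
rewrite !powRN lef_pV2 ?posrE ?powR_gt0//.
by apply: ge0_ler_powR => //; rewrite ?nnegrE ltW// ltW.
Qed.

Lemma powR_invol (g x : R) : 0 < g -> 0 <= x -> (x `^ (- g^-1)) `^ (- g) = x.
Proof.
move=> g0 x0; rewrite -powRrM.
have -> : - g^-1 * - g = 1 by rewrite mulrNN mulVf // lt0r_neq0.
by rewrite powRr1.
Qed.

Lemma powR_invol' (g x : R) : 0 < g -> 0 <= x -> (x `^ (- g)) `^ (- g^-1) = x.
Proof.
move=> g0 x0; rewrite -powRrM.
have -> : - g * - g^-1 = 1 by rewrite mulrNN mulfV // lt0r_neq0.
by rewrite powRr1.
Qed.

Lemma normE (g t : R) (M : nat) : 0 < g -> 0 < t ->
  zm_norm g t M = g * (1 - t / (t + M%:R + 1)).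
Proof.
move=> g0 t0.
have M0 : 0 <= M%:R :> R by exact: ler0n.
have T0 : 0 < t + M%:R + 1 by lra.
have u0 : 0 < t / (t + M%:R + 1) by rewrite divr_gt0.
have u1 : t / (t + M%:R + 1) <= 1.
  rewrite ler_pdivrMr // mul1r; lra.
have U1 : 1 <= zm_upper g t M.
  by have := powR_inv_decr g0 u0 u1; rewrite powR1.
rewrite /zm_norm.
have := @int_pow g 1 1 _ g0 ltr01 U1.
under eq_integral do rewrite mul1r.
move=> ->; rewrite /= powR1 mul1r /zm_upper powR_invol' ?ltW //.
Qed.

Lemma setL0 (q U : R) : q < 1 -> `]-oo, q] `&` `[1, U] = set0.
Proof.
move=> q1; apply/seteqP; split => x //=; rewrite !in_itv /= => -[xq /andP[x1 _]].
lra.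
Qed.

Lemma setL1 (q U : R) : 1 <= q <= U -> `]-oo, q] `&` `[1, U] = `[1, q]%classic.
Proof.
move=> /andP[q1 qU]; apply/seteqP; split => x /=; rewrite !in_itv /=.
  by move=> [-> /andP[-> _]].
move=> /andP[x1 xq]; rewrite xq x1 /=; split => //; lra.
Qed.

Lemma setL2 (q U : R) : U < q -> `]-oo, q] `&` `[1, U] = `[1, U]%classic.
Proof.
move=> qU; apply/seteqP; split => x /=; rewrite !in_itv /=.
  by move=> [_ ->].
move=> /andP[x1 xU]; rewrite x1 xU /=; split => //; lra.
Qed.

Lemma setR0 (q U : R) : U < q -> `[q, +oo[ `&` `[1, U] = set0.
Proof.
move=> q1; apply/seteqP; split => x //=; rewrite !in_itv /= andbT => -[xq /andP[_ x1]].
lra.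
Qed.

Lemma setR1 (q U : R) : 1 <= q <= U -> `[q, +oo[ `&` `[1, U] = `[q, U]%classic.
Proof.
move=> /andP[q1 qU]; apply/seteqP; split => x /=; rewrite !in_itv /= ?andbT.
  by move=> [-> /andP[_ ->]].
move=> /andP[x1 xq]; rewrite xq x1 /=; split => //; lra.
Qed.

Lemma setR2 (q U : R) : q < 1 -> `[q, +oo[ `&` `[1, U] = `[1, U]%classic.
Proof.
move=> qU; apply/seteqP; split => x /=; rewrite !in_itv /= ?andbT.
  by move=> [_ ->].
move=> /andP[x1 xU]; rewrite x1 xU /=; split => //; lra.
Qed.

Lemma probI (g t : R) (M : nat) (a b : R) : 0 < g -> 1 <= a -> a <= b ->
  fine (\int[lebesgue_measure]_(x in `[a, b]) ((zm_norm g t M)^-1 * x `^ (- zm_alpha g))%:E)%E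
  = (zm_norm g t M)^-1 * g * (a `^ (- g^-1) - b `^ (- g^-1)).
Proof.
move=> g0 a1 ab; rewrite int_pow //; lra.
Qed.

Lemma part1 (g t : R) (M : nat) : 0 < g -> 0 < t ->
  exists c : R, 0 < c /\
       forall k : nat, (1 <= k <= M)%N ->
         forall q : R,
           zm_is_quantile g t M (k%:R / (M%:R + 1)) q <->
           q = c * (t + (M + 1 - k)%:R) `^ (- g).
Proof.
move=> g0 t0.
have M0 : 0 <= M%:R :> R by exact: ler0n.
set T := t + M%:R + 1.
have T0 : 0 < T by rewrite /T; lra.
set u := t / T.
have u0 : 0 < u by rewrite divr_gt0.
have u1 : 1 - u = (M%:R + 1) / T by rewrite /u /T; field; lra.
have u1' : 0 < 1 - u by rewrite u1 divr_gt0 //; lra.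
set U := zm_upper g t M.
have UE : U = u `^ (- g) by [].
have sU : U `^ (- g^-1) = u by rewrite UE powR_invol' // ltW.
have NE : zm_norm g t M = g * (1 - u) by rewrite normE.
have PL : forall q, 1 <= q <= U -> zm_prob g t M `]-oo, q] = (1 - q `^ (- g^-1)) / (1 - u).
  move=> q /andP[q1 qU]; rewrite prob_restr /zm_support setL1 ?q1 ?qU // probI //.
  rewrite powR1 NE; field; apply/andP; split; apply: lt0r_neq0 => //.
have PR : forall q, 1 <= q <= U -> zm_prob g t M `[q, +oo[ = (q `^ (- g^-1) - u) / (1 - u).
  move=> q /andP[q1 qU]; rewrite prob_restr /zm_support setR1 ?q1 ?qU // probI //.
  rewrite sU NE; field; apply/andP; split; apply: lt0r_neq0 => //.
have PL0 : forall q, q < 1 -> zm_prob g t M `]-oo, q] = 0.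
  by move=> q q1; rewrite prob_restr /zm_support setL0 // integral_set0.
have PR0 : forall q, U < q -> zm_prob g t M `[q, +oo[ = 0.
  by move=> q q1; rewrite prob_restr /zm_support setR0 // integral_set0.
exists (T `^ g); split; first by rewrite powR_gt0.
move=> k /andP[k1 kM] q.
have k0 : 1 <= k%:R :> R by rewrite ler1n.
have kM' : k%:R <= M%:R :> R by rewrite ler_nat.
set p := k%:R / (M%:R + 1).
have p0 : 0 < p by rewrite divr_gt0 //; lra.
have p1 : p < 1 by rewrite ltr_pdivrMr; lra.
set v := (T - k%:R) / T.
have v0 : 0 < v by rewrite divr_gt0 // /T; lra.
have uv : u <= v by rewrite ler_pM2r ?invr_gt0 // /T; lra.
have v1 : v <= 1 by rewrite ler_pdivrMr // mul1r; lra.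
have vp : (1 - v) / (1 - u) = p by rewrite u1 /v /p; field; apply/andP; split; apply: lt0r_neq0 => //; lra.
have tgE : T `^ g * (t + (M + 1 - k)%:R) `^ (- g) = v `^ (- g).
  have e1 : t + (M + 1 - k)%:R = T - k%:R.
    rewrite natrB; last by apply: leq_trans kM _; rewrite addn1.
    by rewrite natrD /T; ring.
  rewrite e1 /v powRM; last 2 first.
  - by rewrite subr_ge0 /T; lra.
  - by rewrite invr_ge0 ltW.
  have -> : T^-1 `^ (- g) = T `^ g.
    by rewrite -mulN1r powRrM powR_inv1 ?invr_ge0 ?ltW // invrK.
  by rewrite mulrC.
rewrite tgE.
have tg1 : 1 <= v `^ (- g) by have := powR_inv_decr g0 v0 v1; rewrite powR1.
have tgU : v `^ (- g) <= U by rewrite UE; exact: powR_inv_decr.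
have stg : (v `^ (- g)) `^ (- g^-1) = v by rewrite powR_invol' // ltW.
split.
- move=> [hL hR].
  have [q1|q1] := ltP q 1; first by move: hL; rewrite PL0 // leNgt p0.
  have [qU|qU] := ltP U q; first by move: hR; rewrite PR0 // subr_le0 leNgt p1.
  have qq : 1 <= q <= U by rewrite q1 qU.
  move: hL hR; rewrite PL // PR // => hL hR.
  have e : (1 - q `^ (- g^-1)) / (1 - u) = p.
    apply/eqP; rewrite eq_le hL andbT.
    have -> : (1 - q `^ (- g^-1)) / (1 - u) = 1 - (q `^ (- g^-1) - u) / (1 - u).
      by field; apply: lt0r_neq0.
    by move: hR; rewrite !lerBlDl (addrC p).
  have sq : q `^ (- g^-1) = v.
    by move: e; rewrite -vp => /(mulIf (invr_neq0 (lt0r_neq0 u1')))/addrI/oppr_inj.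
  by rewrite -sq powR_invol // (le_trans ler01 q1).
- move=> ->; split.
  + by rewrite PL ?tg1 ?tgU // stg vp.
  + rewrite PR ?tg1 ?tgU // stg -vp.
    rewrite [X in _ <= X](_ : _ = 1 - (1 - v)/(1 - u)) //.
    by field; apply: lt0r_neq0.
Qed.
Lemma upper_inv (g t : R) (M : nat) : 0 < g -> 0 < t ->
  zm_upper g t M = ((t + M%:R + 1) / t) `^ g.
Proof.
move=> g0 t0; rewrite /zm_upper -mulN1r powRrM powR_inv1 ?invf_div //.
have M0 : 0 <= M%:R :> R by exact: ler0n.
by apply: divr_ge0; [exact: ltW | lra].
Qed.

Lemma powR_mono (g x y : R) : 0 < g -> 0 <= x -> 0 <= y -> (x `^ g <= y `^ g) = (x <= y).
Proof.
move=> g0 x0 y0; apply/idP/idP; last by move=> xy; apply: ge0_ler_powR => //; exact: ltW.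
apply: contraLR; rewrite -!ltNge => yx.
exact: gt0_ltr_powR.
Qed.

Lemma part2 (g : R) (M : nat) : 0 < g -> (0 < M)%N ->
  (forall F : 'I_M -> nat,
     (forall i, (1 <= F i)%N) ->
     (1 < \max_(i < M) F i)%N ->
     let tstar := (M%:R + 1) / (((\max_(i < M) F i)%:R : R) `^ (g^-1) - 1) in
     0 < tstar /\
     forall t : R, 0 < t -> t != tstar ->
       zm_likelihood g t M F < zm_likelihood g tstar M F).
Proof.
move=> g0 M0 F F1 Fmx.
have M0' : 0 <= M%:R :> R by exact: ler0n.
have mx1 : 1 < (\max_(i < M) F i)%:R :> R by rewrite ltr1n.
have mxE : (\max_(i < M) F i)%:R = (((\max_(i < M) F i)%:R : R) `^ (g^-1)) `^ g.
  rewrite -powRrM mulVf ?lt0r_neq0 // powRr1 //; exact: ler0n.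
move: mx1 mxE.
set mx := ((\max_(i < M) F i)%:R : R).
set m := mx `^ (g^-1) => mx1 mxE tstar.
have m1 : 1 < m.
  have gi : 0 < g^-1 by rewrite invr_gt0.
  have := @gt0_ltr_powR R (g^-1) gi 1 mx; rewrite powR1; apply => //.
  - by rewrite nnegrE.
  - by rewrite nnegrE; lra.
have ts0 : 0 < tstar by rewrite divr_gt0 //; lra.
split => //.
have key : forall t : R, 0 < t -> (mx <= zm_upper g t M) = (t <= tstar).
  move=> t t0; rewrite upper_inv // mxE powR_mono //; last 2 first.
  - exact: powR_ge0.
  - by apply: divr_ge0; [lra | exact: ltW].
  rewrite ler_pdivlMr // ler_pdivlMr ?subr_gt0 // mulrBr mulr1 lerBlDl -addrA (mulrC t).
  done.
have dens : forall t, 0 < t -> t <= tstar -> forall i,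
    zm_density g t M (F i)%:R =
    (F i)%:R `^ (- zm_alpha g) * ((t + M%:R + 1) / (g * (M%:R + 1))).
  move=> t t0 tt i; rewrite /zm_density ifT; last first.
    apply/andP; split; first by rewrite ler1n F1.
    apply: (@le_trans _ _ mx); first by rewrite /mx ler_nat leq_bigmax.
    by rewrite key.
  have T0 : t + M%:R + 1 != 0 by apply: lt0r_neq0; lra.
  have M1 : M%:R + 1 != 0 :> R by apply: lt0r_neq0; lra.
  rewrite normE //; congr (_ * _).
  by field; rewrite T0 M1 lt0r_neq0.
have Lform : forall t, 0 < t -> t <= tstar -> zm_likelihood g t M F =
   (\prod_(i < M) (F i)%:R `^ (- zm_alpha g)) * ((t + M%:R + 1) / (g * (M%:R + 1))) ^+ M.
  move=> t t0 tt; rewrite /zm_likelihood (eq_bigr _ (fun i _ => dens t t0 tt i)).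
  by rewrite big_split /= prodr_const card_ord.
have P0 : 0 < \prod_(i < M) (F i)%:R `^ (- zm_alpha g).
  by apply: prodr_gt0 => i _; apply: powR_gt0; rewrite ltr0n F1.
have Q0 : forall t, 0 < t -> 0 < (t + M%:R + 1) / (g * (M%:R + 1)).
  move=> t t0; apply: divr_gt0; first lra.
  apply: mulr_gt0 => //; lra.
move=> t t0 tne.
have [tgt|tge] := ltP tstar t; last first.
  have tlt : t < tstar by rewrite lt_neqAle tne tge.
  rewrite !Lform // ?ltW // ltr_pM2l // ltrXn2r ?lt0n_neq0 //; first exact: ltW (Q0 t t0).
  by rewrite ltr_pM2r ?invr_gt0 ?mulr_gt0 //; lra.
rewrite [X in _ < X]Lform // ?lexx //.
have [i0 Hi0] := @bigop.eq_bigmax _ F (ltac:(by rewrite card_ord)).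
rewrite /zm_likelihood (bigD1 i0) //= /zm_density ifF ?mul0r.
  by apply: mulr_gt0 => //; apply: exprn_gt0; exact: Q0.
by rewrite -Hi0 -/mx key // (leNgt t) tgt andbF.
Qed.
End S.

Local Close Scope classical_set_scope.
Theorem proposition2 (R : realType) (gamma : R) (M : nat) :
  0 < gamma -> (0 < M)%N ->
  (* (1) the (M+1)-quantiles are c (t+1)^-gamma, ..., c (t+M)^-gamma *)
  (forall t : R, 0 < t ->
     exists c : R, 0 < c /\
       forall k : nat, (1 <= k <= M)%N ->
         forall q : R,
           zm_is_quantile gamma t M (k%:R / (M%:R + 1)) q <->
           q = c * (t + (M + 1 - k)%:R) `^ (- gamma)) /\
  (* (2) maximum likelihood estimate of t *)
  (forall F : 'I_M -> nat,
     (forall i, (1 <= F i)%N) ->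
     (1 < \max_(i < M) F i)%N ->
     let tstar := (M%:R + 1) / (((\max_(i < M) F i)%:R : R) `^ (gamma^-1) - 1) in
     0 < tstar /\
     forall t : R, 0 < t -> t != tstar ->
       zm_likelihood gamma t M F < zm_likelihood gamma tstar M F).
Proof.
move=> g0 M0; split; first by move=> t t0; exact: part1.
exact: part2.
Qed.
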